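(* Let $i,j,k$ be distinct integers with $1 \leq i,j,k \leq r$. For any $l \geq 1$, the graph $\mathcal{H}(V_i,V_j,V_k)$ does not contain a copy of $K_{2,2l^2+1}$ whose part of size $2$ consists of one vertex in $V_i$ and one vertex in $V_j$ and whose part of size $2l^2+1$ lies in $V_k$.
   Context: Let $r \geq 3$ and $l \geq 1$ be integers and $q$ a power of an odd prime. Let $\alpha_1, \dots, \alpha_r$ be distinct elements of $\mathbb{F}_q$, and let $m_1, \dots, m_l$ be distinct elements of $\mathbb{F}_q^* = \mathbb{F}_q\setminus\{0\}$ such that $m_s(\alpha_k - \alpha_i) \neq m_t(\alpha_k - \alpha_j)$ whenever $1 \leq s,t \leq l$ and $i,j,k$ are distinct integers in $\{1,\dots,r\}$. For $1 \leq i \leq r$ let $V_i = \mathbb{F}_q \times \mathbb{F}_q \times \{i\}$. For $x,y \in \mathbb{F}_q$, $a \in \mathbb{F}_q^*$, $s \in \{1,\dots,l\}$ let \[ e(x,y,a,m_s) = \{(x + \alpha_i m_s a,\; y + \alpha_i m_s a^2,\; i) : 1 \leq i \leq r\}. \] $\mathcal{H}$ is the $r$-uniform hypergraph with vertex set $V_1 \cup \dots \cup V_r$ and edge set $\{e(x,y,a,m_s) : x,y \in \mathbb{F}_q,\ a \in \mathbb{F}_q^*,\ 1 \leq s \leq l\}$. For $i \neq j$, $\mathcal{H}(V_i,V_j)$ is the bipartite graph with parts $V_i$ and $V_j$ in which $u \in V_i$ and $w \in V_j$ are adjacent iff $\{u,w\} \subseteq e$ for some edge $e$ of $\mathcal{H}$.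 For distinct $i,j,k$, $\mathcal{H}(V_i,V_j,V_k)$ is the graph on $V_i \cup V_j \cup V_k$ that is the union of $\mathcal{H}(V_i,V_j)$, $\mathcal{H}(V_j,V_k)$ and $\mathcal{H}(V_k,V_i)$. *)

(* Defs.v *)
From HB Require Import structures.
From mathcomp Require Import all_boot all_order all_algebra all_field.
Set Implicit Arguments. Unset Strict Implicit. Unset Printing Implicit Defensive.
Import GRing.Theory.
Local Open Scope ring_scope.

(* The point of V_i (i : 'I_r) with coordinates (x,y) is represented by the
   pair (x, y) together with the index i (carried separately).
   The edge e(x,y,a,m_s) contains, for each part index i, the vertex
   (x + alpha_i m_s a, y + alpha_i m_s a^2, i). *)
Definition edge_pt (F : fieldType) (r l : nat) (alpha : 'I_r -> F)
  (m : 'I_l -> F) (x y a : F) (s : 'I_l) (i : 'I_r) : F * F :=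
  (x + alpha i * m s * a, y + alpha i * m s * a ^+ 2).

Definition Hadj (F : fieldType) (r l : nat) (alpha : 'I_r -> F)
  (m : 'I_l -> F) (i j : 'I_r) (u w : F * F) : Prop :=
  exists (x y a : F) (s : 'I_l),
    a != 0 /\ u = edge_pt alpha m x y a s i /\ w = edge_pt alpha m x y a s j.

(* Main.v *)
Require Import Defs.
From HB Require Import structures.
From mathcomp Require Import all_boot all_order all_algebra all_field.
From mathcomp Require Import ring zify.
Import GRing.Theory.
Local Open Scope ring_scope.

Lemma card_bigcup_le (T I : finType) (A : I -> {set T}) :
  (#|\bigcup_(i : I) A i| <= \sum_(i : I) #|A i|)%N.
Proof.
elim/big_rec2: _ => [|st n X _ h]; first by rewrite cards0.
apply: leq_trans (leq_card_setU _ _) _; exact: leq_add.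
Qed.

Lemma quad_roots (F : finFieldType) (A B C : F) : A != 0 ->
  (#|[set x : F | (A * x ^+ 2 + B * x + C == 0)%R]| <= 2)%N.
Proof.
move=> hA; set p := Poly [:: C; B; A].
have hp : p != 0.
  apply/eqP => h0; move: hA; rewrite -[A]/([:: C; B; A]`_2) -coef_Poly -/p h0.
  by rewrite coef0 eqxx.
have := max_poly_roots hp (rs := enum [set x : F | (A * x ^+ 2 + B * x + C == 0)%R]).
rewrite enum_uniq cardE => /(_ _ isT) h.
have : (size (enum [set x : F | (A * x ^+ 2 + B * x + C == 0)%R]) < 3)%N.
  apply: leq_trans (h _) (size_Poly _).
  apply/allP => x; rewrite mem_enum inE /root horner_Poly /= => /eqP e.
  by apply/eqP; rewrite -[RHS]e; ring.
by [].
Qed.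

Lemma adj_eq (F : fieldType) (r l : nat) (alpha : 'I_r -> F) (m : 'I_l -> F)
  (i k : 'I_r) (u z : F * F) : Hadj alpha m i k u z ->
  exists s, (z.1 - u.1) ^+ 2 = m s * (alpha k - alpha i) * (z.2 - u.2).
Proof.
move=> [x [y [a [s [_ [-> ->]]]]]]; exists s; rewrite /edge_pt /=; ring.
Qed.

Theorem lemma3p9 (F : finFieldType) (r l : nat)
  (alpha : 'I_r -> F) (m : 'I_l -> F) (i j k : 'I_r) :
  odd #|F| ->
  (3 <= r)%N -> (1 <= l)%N ->
  injective alpha -> injective m -> (forall s, m s != 0) ->
  (forall (s t : 'I_l) (i' j' k' : 'I_r),
      i' != j' -> j' != k' -> i' != k' ->
      m s * (alpha k' - alpha i') != m t * (alpha k' - alpha j')) ->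
  i != j -> j != k -> i != k ->
  ~ exists (u w : F * F) (S : {set F * F}),
      #|S| = (2 * l ^ 2 + 1)%N /\
      (forall z, z \in S -> Hadj alpha m i k u z /\ Hadj alpha m j k w z).
Proof.
move=> _ _ _ ainj minj mnz hst hij hjk hik [u [w [S [hS hadj]]]].
pose c s := m s * (alpha k - alpha i).
pose c' t := m t * (alpha k - alpha j).
have cnz s : c s != 0.
  rewrite mulf_neq0 // subr_eq0; apply/eqP => /ainj /eqP; by rewrite eq_sym (negPf hik).
pose T (st : 'I_l * 'I_l) := [set z : F * F |
   ((z.1 - u.1) ^+ 2 == c st.1 * (z.2 - u.2)) &&
   ((z.1 - w.1) ^+ 2 == c' st.2 * (z.2 - w.2))].
have hsub : S \subset \bigcup_(st : 'I_l * 'I_l) T st.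
  apply/subsetP => z /hadj [/adj_eq [s hs] /adj_eq [t ht]].
  apply/bigcupP; exists (s, t) => //; rewrite inE /= hs ht !eqxx //.
have hT st : (#|T st| <= 2)%N.
  case: st => s t.
  set A := c' t - c s.
  set B := 2%:R * (c s * w.1 - c' t * u.1).
  set C := c' t * u.1 ^+ 2 - c s * w.1 ^+ 2 - c s * c' t * (w.2 - u.2).
  have hA : A != 0 by rewrite /A subr_eq0 eq_sym; apply: hst.
  have hq := @quad_roots _ A B C hA. apply: (leq_trans _ hq).
  rewrite -(@card_in_imset _ _ (fun z : F * F => z.1)).
    apply: subset_leq_card; apply/subsetP => x /imsetP [z hz ->].
    move: hz; rewrite /T [z \in _]inE /= => /andP [/eqP h1 /eqP h2].
    rewrite inE; apply/eqP.
    have -> : A * z.1 ^+ 2 + B * z.1 + C =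
      c' t * (z.1 - u.1) ^+ 2 - c s * (z.1 - w.1) ^+ 2 - c s * c' t * (w.2 - u.2).
      by rewrite /A /B /C; ring.
    rewrite h1 h2; ring.
  move=> [z1 z2] [y1 y2]; rewrite !inE /= => /andP [/eqP h1 _] /andP [/eqP h2 _] e.
  subst y1; congr (_, _).
  have : c s * (z2 - u.2) = c s * (y2 - u.2) by rewrite -h1 -h2.
  by move/(mulfI (cnz s))/eqP; rewrite (inj_eq (addIr _)) => /eqP.
have := leq_trans (subset_leq_card hsub) (@card_bigcup_le _ _ T).
have hs : (\sum_(st : 'I_l * 'I_l) #|T st| <= \sum_(st : 'I_l * 'I_l) 2)%N.
  by apply: leq_sum => st _; exact: hT.
move=> h; have := leq_trans h hs.
rewrite sum_nat_const card_prod card_ord hS.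
rewrite expnS expn1; lia.
Qed.
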